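(* (1) For every $\gamma\in(0,1]$ there exists $c_*=c_*(\gamma)>0$ such that $\lambda_{n,\gamma}\ge c_*n^{2/(1+\gamma)}$ for all $n\in\mathbb{N}^*$. (2) For every $\gamma>0$ there exists $c^*=c^*(\gamma)>0$ such that $\lambda_{n,\gamma}\le c^*n^{2/(1+\gamma)}$ for all $n\in\mathbb{N}^*$.
   Context: For $n\in\mathbb{N}^*$ and $\gamma>0$, $\lambda_{n,\gamma}$ is the smallest eigenvalue of the operator $A_{n,\gamma}\varphi=-\varphi''+(n\pi)^2|x|^{2\gamma}\varphi$ with domain $H^2(-1,1)\cap H^1_0(-1,1)$, i.e. $\lambda_{n,\gamma}=\min\big\{\int_{-1}^1[v'^2+(n\pi)^2|x|^{2\gamma}v^2]dx/\int_{-1}^1v^2dx:\ v\in H^1_0(-1,1)\setminus\{0\}\big\}$. *)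

(* Defs.v *)
From Stdlib Require Import Reals Lra ClassicalEpsilon.
Open Scope R_scope.

(* |x|^(2 gamma), with the convention 0^(2 gamma) = 0 (Rpower 0 y = 1 in Stdlib). *)
Definition abs_pow2 (g x : R) : R :=
  if Req_dec_T x 0 then 0 else Rpower (Rabs x) (2 * g).

(* Test functions: C^1 on [-1,1] (v' is the derivative of v and is continuous there),
   vanishing at -1 and 1, and not identically zero on [-1,1].
   These are dense in H^1_0(-1,1). *)
Definition admissible (v v' : R -> R) : Prop :=
  (forall x, -1 <= x <= 1 -> derivable_pt_lim v x (v' x)) /\
  (forall x, -1 <= x <= 1 -> continuity_pt v' x) /\
  v (-1) = 0 /\ v 1 = 0 /\
  (exists x, -1 <= x <= 1 /\ v x <> 0).

Definition rayleigh_value (n : nat) (g : R) (v v' : R -> R) (q : R) : Prop :=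
  exists (p1 : Riemann_integrable
                 (fun x => v' x ^ 2 + (INR n * PI) ^ 2 * abs_pow2 g x * v x ^ 2) (-1) 1)
         (p2 : Riemann_integrable (fun x => v x ^ 2) (-1) 1),
    q = RiemannInt p1 / RiemannInt p2.

Definition rayleigh_set (n : nat) (g : R) (q : R) : Prop :=
  exists v v', admissible v v' /\ rayleigh_value n g v v' q.

Definition is_glb (E : R -> Prop) (l : R) : Prop :=
  (forall x, E x -> l <= x) /\ (forall b, (forall x, E x -> b <= x) -> b <= l).

(* lambda_{n,gamma}: the minimum (= infimum) of the Rayleigh quotient. *)
Definition lambda (n : nat) (g : R) : R :=
  epsilon (inhabits 0) (fun l => is_glb (rayleigh_set n g) l).

(* Main.v *)
Require Import Defs.
From Stdlib Require Import Reals Lra Psatz ClassicalEpsilon.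
From Coquelicot Require Import Coquelicot.
Open Scope R_scope.

Lemma cont_sq (f : R -> R) x : continuity_pt f x -> continuity_pt (fun y => f y ^ 2) x.
Proof.
  intro H. change (continuity_pt (f * (f * fct_cte 1))%F x).
  apply continuity_pt_mult; auto. apply continuity_pt_mult; auto. apply continuity_pt_const. intros a b; reflexivity.
Qed.

Lemma adm_cont v v' : admissible v v' -> forall x, -1 <= x <= 1 -> continuity_pt v x.
Proof.
  intros [Hd _] x Hx. apply derivable_continuous_pt. exists (v' x). apply Hd; auto.
Qed.

Lemma den_pos v v' (Ha : admissible v v') (p2 : Riemann_integrable (fun x => v x ^ 2) (-1) 1) :
  0 < RiemannInt p2.
Proof.
  rewrite <- RInt_Reals.
  set (f := fun x => v x ^ 2).
  assert (Hc : forall x, -1 <= x <= 1 -> continuous f x).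
  { intros x Hx. apply continuity_pt_filterlim. apply cont_sq. eapply adm_cont; eauto. }
  destruct Ha as (_ & _ & _ & _ & x0 & Hx0 & Hv0).
  set (a := f x0).
  assert (Ha : 0 < a). { unfold a, f. apply pow2_gt_0; auto. }
  pose proof (proj2 (continuity_pt_filterlim f x0) (Hc x0 Hx0)) as Hcp. unfold continuity_pt, continue_in, limit1_in, limit_in in Hcp.
  destruct (Hcp (a/2)) as [d [Hd Hy]]; [lra|].
  assert (Hpos : forall y, Rabs (y - x0) < d -> a/2 < f y).
  { intros y Hy'. destruct (Req_dec y x0) as [->|Hne]. { fold a; lra. }
    assert (Hr := Hy y (conj (conj I (not_eq_sym Hne)) Hy')). simpl in Hr. unfold R_dist in Hr.
    apply Rabs_def2 in Hr. fold a in Hr. lra. }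
  set (c := Rmax (-1) (x0 - d/2)). set (e := Rmin 1 (x0 + d/2)).
  assert (Hc1 : -1 <= c <= x0) by (unfold c, Rmax; destruct Rle_dec; lra).
  assert (He1 : x0 <= e <= 1) by (unfold e, Rmin; destruct Rle_dec; lra).
  assert (Hce : c < e).
  { unfold c, e, Rmax, Rmin; do 2 destruct Rle_dec; lra. }
  assert (Hex : forall p q, -1 <= p -> p <= q -> q <= 1 -> ex_RInt f p q).
  { intros p q H1 H2 H3. apply (ex_RInt_continuous (V:=R_CompleteNormedModule)). intros z Hz. apply Hc.
    rewrite Rmin_left in Hz by lra. rewrite Rmax_right in Hz by lra. lra. }
  rewrite <- (RInt_Chasles f (-1) c 1) by (apply Hex; lra).
  rewrite <- (RInt_Chasles f c e 1) by (apply Hex; lra).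
  change plus with Rplus.
  assert (H1 : 0 <= RInt f (-1) c).
  { apply RInt_ge_0; [lra| apply Hex; lra |]. intros; unfold f; apply pow2_ge_0. }
  assert (H3 : 0 <= RInt f e 1).
  { apply RInt_ge_0; [lra| apply Hex; lra |]. intros; unfold f; apply pow2_ge_0. }
  assert (H2 : 0 < RInt f c e).
  { apply RInt_gt_0; auto.
    - intros x Hx. assert (a/2 < f x); [|lra]. apply Hpos.
      unfold c, e, Rmax, Rmin in Hx. apply Rabs_def1; revert Hx; do 2 destruct Rle_dec; lra.
    - intros x Hx; apply Hc; lra. }
  lra.
Qed.

Lemma abs_pow2_nonneg g x : 0 <= abs_pow2 g x.
Proof. unfold abs_pow2; destruct Req_dec_T; [lra| unfold Rpower; left; apply exp_pos]. Qed.

Lemma Rpower_pos a b : 0 < Rpower a b.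
Proof. unfold Rpower; apply exp_pos. Qed.

Lemma Rpower_two a : 0 < a -> Rpower a 2 = a ^ 2.
Proof. intro. rewrite <- Rpower_pow by auto. f_equal. Qed.

Lemma ex_glb (E : R -> Prop) : (exists q, E q) -> (forall q, E q -> 0 <= q) -> exists l, is_glb E l.
Proof.
  intros [q0 Hq0] Hb.
  destruct (completeness (fun x => E (- x))) as [m [Hm1 Hm2]].
  - exists 0. intros x Hx. specialize (Hb _ Hx). lra.
  - exists (- q0). rewrite Ropp_involutive; auto.
  - exists (- m). split.
    + intros x Hx. assert (x = - - x) by ring. assert (- x <= m); [|lra].
      apply Hm1. rewrite Ropp_involutive; auto.
    + intros b Hb'. assert (m <= - b); [|lra]. apply Hm2. intros x Hx.
      specialize (Hb' _ Hx). lra.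
Qed.

Lemma lambda_glb n g : (exists q, rayleigh_set n g q) -> (forall q, rayleigh_set n g q -> 0 <= q) ->
  is_glb (rayleigh_set n g) (lambda n g).
Proof.
  intros H1 H2. unfold lambda. apply epsilon_spec. apply ex_glb; auto.
Qed.

Lemma q_nonneg n g q : rayleigh_set n g q -> 0 <= q.
Proof.
  intros (v & v' & Ha & p1 & p2 & ->).
  pose proof (den_pos v v' Ha p2).
  apply Rmult_le_pos; [| left; apply Rinv_0_lt_compat; auto].
  rewrite <- RInt_Reals. apply RInt_ge_0; [lra | apply ex_RInt_Reals_1; auto |].
  intros x _. pose proof (abs_pow2_nonneg g x).
  pose proof (pow2_ge_0 (v' x)); pose proof (pow2_ge_0 (v x)); pose proof (pow2_ge_0 (INR n * PI)).
  assert (0 <= (INR n * PI) ^ 2 * abs_pow2 g x * v x ^ 2) by (apply Rmult_le_pos; auto; apply Rmult_le_pos; auto).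
  lra.
Qed.

Section Lower.
Variables (n : nat) (g : R) (v v' : R -> R).
Hypotheses (Hn : (1 <= n)%nat) (Hg : 0 < g) (Ha : admissible v v').

Let X := 2 * PI ^ 4 * INR n ^ 2.
Let h := Rpower X (- / (2 + 2 * g)).
Let K := 2 * PI ^ 2 * h ^ 2.
Let phi x := h * atan (x / h).
Let dphi x := / (1 + (x / h) ^ 2).

Lemma INRn_pos : 0 < INR n.
Proof. apply lt_0_INR; lia. Qed.

Lemma X_pos : 0 < X.
Proof. unfold X. pose proof PI_RGT_0. pose proof INRn_pos. apply Rmult_lt_0_compat; [|apply pow_lt; auto]. 
  apply Rmult_lt_0_compat; [lra| apply pow_lt; auto]. Qed.

Lemma h_pos : 0 < h.
Proof. apply Rpower_pos. Qed.

Lemma h_key : X * (h ^ 2 * Rpower h (2 * g)) = 1.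
Proof.
  pose proof X_pos. pose proof h_pos.
  rewrite <- Rpower_two by auto. rewrite <- Rpower_plus. unfold h. rewrite Rpower_mult.
  replace (- / (2 + 2 * g) * (2 + 2 * g)) with (- (1)) by (field; lra).
  rewrite Rpower_Ropp, Rpower_1 by auto. field. lra.
Qed.

Lemma h_inv : / h ^ 2 = Rpower X (/ (1 + g)).
Proof.
  pose proof X_pos. pose proof h_pos.
  rewrite <- Rpower_two by auto. unfold h. rewrite Rpower_mult.
  replace (- / (2 + 2 * g) * 2) with (- / (1 + g)) by (field; lra).
  rewrite Rpower_Ropp. rewrite Rinv_inv. auto.
Qed.

Lemma key_pt x : 1 <= 2 * dphi x + K * (INR n * PI) ^ 2 * abs_pow2 g x.
Proof.
  pose proof h_pos. pose proof (abs_pow2_nonneg g x).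
  assert (Hd : 0 < dphi x). { unfold dphi. apply Rinv_0_lt_compat. pose proof (pow2_ge_0 (x/h)). lra. }
  assert (HK : 0 <= K * (INR n * PI) ^ 2). { unfold K. pose proof (pow2_ge_0 (INR n * PI)). pose proof (pow2_ge_0 h). pose proof PI_RGT_0. pose proof (pow2_ge_0 PI). 
     apply Rmult_le_pos; auto. apply Rmult_le_pos; lra. }
  destruct (Rle_dec (Rabs x) h) as [Hx|Hx].
  - assert (/2 <= dphi x); [| pose proof (Rmult_le_pos _ _ HK H0); lra].
    unfold dphi. pose proof (pow2_ge_0 (x/h)). apply Rinv_le_contravar; [lra|].
    assert ((x/h)^2 <= 1); [|lra].
    assert (Hx2 : x^2 <= h^2) by (rewrite <- (pow2_abs x); pose proof (Rabs_pos x); nra).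
    replace ((x/h)^2) with (x^2 * /h^2) by (field; lra).
    apply Rmult_le_reg_r with (h^2); [nra|]. rewrite Rmult_assoc, Rinv_l, Rmult_1_r by nra. lra.
  - assert (Hx0 : x <> 0). { intro; subst. rewrite Rabs_R0 in Hx. lra. }
    unfold abs_pow2. destruct Req_dec_T as [|_]; [contradiction|].
    assert (Rpower h (2 * g) <= Rpower (Rabs x) (2 * g)) by (apply Rle_Rpower_l; lra).
    assert (K * (INR n * PI) ^ 2 * Rpower h (2 * g) = 1).
    { rewrite <- h_key. unfold K, X. ring. }
    assert (K * (INR n * PI) ^ 2 * Rpower h (2 * g) <= K * (INR n * PI) ^ 2 * Rpower (Rabs x) (2 * g)) by (apply Rmult_le_compat_l; auto).
    lra.
Qed.


Lemma phi_der x : derivable_pt_lim phi x (dphi x).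
Proof.
  pose proof h_pos.
  assert (H1 : derivable_pt_lim (fun y => y / h) x (/ h)).
  { apply is_derive_Reals. auto_derive; auto. field; lra. }
  pose proof (derivable_pt_lim_comp _ _ _ _ _ H1 (derivable_pt_lim_atan (x / h))) as H2.
  pose proof (derivable_pt_lim_scal _ h _ _ H2) as H3.
  unfold phi, dphi. replace (/ (1 + (x / h) ^ 2)) with (h * (/ (1 + (x / h) ^ 2) * / h)) by (field; split; [lra|]; pose proof (pow2_ge_0 x); pose proof (pow2_gt_0 h); lra).
  exact H3.
Qed.

Lemma phi_bound x : phi x ^ 2 <= PI ^ 2 * h ^ 2 / 4.
Proof.
  pose proof h_pos. pose proof (atan_bound (x / h)). pose proof PI_RGT_0.
  unfold phi. assert (- (PI * h / 2) <= h * atan (x / h) <= PI * h / 2).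
  { split; [ assert (h * (- PI/2) <= h * atan (x/h)) by (apply Rmult_le_compat_l; lra)
           | assert (h * atan (x/h) <= h * (PI/2)) by (apply Rmult_le_compat_l; lra)]; lra. }
  nra.
Qed.

Lemma dphi_cont x : continuity_pt dphi x.
Proof.
  pose proof h_pos. apply derivable_continuous_pt. 
  exists (- (2 * x / h^2) / (1 + (x/h)^2)^2).
  apply is_derive_Reals. unfold dphi. auto_derive.
  - pose proof (pow2_ge_0 (x/h)). lra.
  - field. split; [lra|]. pose proof (pow2_ge_0 x); pose proof (pow2_gt_0 h); lra.
Qed.

Lemma phi_cont x : continuity_pt phi x.
Proof. apply derivable_continuous_pt. exists (dphi x). apply phi_der. Qed.

Let D x := dphi x * (v x * v x) + phi x * (v' x * v x + v x * v' x).

Lemma D_int : is_RInt D (-1) 1 0.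
Proof.
  destruct Ha as (Hd & Hc & Hm1 & Hp1 & _).
  replace 0 with (minus ((fun x => phi x * (v x * v x)) 1) ((fun x => phi x * (v x * v x)) (-1))).
  2:{ rewrite Hm1, Hp1. unfold minus, plus, opp; simpl. ring. }
  apply (is_RInt_derive (V:=R_CompleteNormedModule) (fun x => phi x * (v x * v x))).
  - intros x Hx. rewrite Rmin_left, Rmax_right in Hx by lra. apply is_derive_Reals.
    unfold D. apply (derivable_pt_lim_mult phi (fun y => v y * v y)). apply phi_der.
    apply (derivable_pt_lim_mult v v); apply Hd; lra.
  - intros x Hx. rewrite Rmin_left, Rmax_right in Hx by lra. apply continuity_pt_filterlim.
    assert (continuity_pt v x) by (eapply adm_cont; eauto; repeat split; auto; lra).
    assert (continuity_pt v' x) by (apply Hc; lra).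
    pose proof (dphi_cont x). pose proof (phi_cont x).
    unfold D. repeat first [assumption | apply continuity_pt_plus | apply continuity_pt_mult].
Qed.


Lemma lower_q (p1 : Riemann_integrable (fun x => v' x ^ 2 + (INR n * PI) ^ 2 * abs_pow2 g x * v x ^ 2) (-1) 1)
  (p2 : Riemann_integrable (fun x => v x ^ 2) (-1) 1) :
  / (4 * PI ^ 2) * Rpower (INR n) (2 / (1 + g)) <= RiemannInt p1 / RiemannInt p2.
Proof.
  set (F := fun x => v' x ^ 2 + (INR n * PI) ^ 2 * abs_pow2 g x * v x ^ 2) in *.
  set (G := fun x => v x ^ 2) in *.
  pose proof (den_pos v v' Ha p2) as HN.
  rewrite <- !RInt_Reals in *.
  pose proof (ex_RInt_Reals_1 _ _ _ p1) as exF.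
  pose proof (ex_RInt_Reals_1 _ _ _ p2) as exG.
  set (N := RInt G (-1) 1) in *. set (Num := RInt F (-1) 1). change (0 < N) in HN.
  pose proof h_pos as Hh. pose proof PI_RGT_0 as Hpi.
  assert (HKp : 0 < K) by (unfold K; pose proof (pow2_gt_0 h); pose proof (pow2_gt_0 PI); nra).
  assert (Hsum : is_RInt (fun x => 2 * D x + / 2 * G x + K * F x) (-1) 1 (2 * 0 + / 2 * N + K * Num)).
  { pose proof (is_RInt_scal _ _ _ 2 _ D_int) as H1.
    pose proof (is_RInt_scal _ _ _ (/2) _ (RInt_correct _ _ _ exG)) as H2.
    pose proof (is_RInt_scal _ _ _ K _ (RInt_correct _ _ _ exF)) as H3.
    pose proof (is_RInt_plus _ _ _ _ _ _ (is_RInt_plus _ _ _ _ _ _ H1 H2) H3) as H4.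
    exact H4. }
  assert (HNle : N <= 2 * 0 + / 2 * N + K * Num).
  { rewrite <- (is_RInt_unique _ _ _ _ Hsum). apply RInt_le; [lra | auto | eexists; eauto |].
    intros x Hx. pose proof (key_pt x) as Hk. pose proof (phi_bound x) as Hb.
    unfold G, F, D.
    set (a := v x) in *. set (b := v' x) in *. set (p := phi x) in *. set (d := dphi x) in *.
    set (w := abs_pow2 g x) in *. set (m := (INR n * PI) ^ 2) in *.
    assert (H1 : 0 <= (2 * d + K * m * w - 1) * a ^ 2) by (apply Rmult_le_pos; [lra | apply pow2_ge_0]).
    assert (H2 : 0 <= (K - 8 * p ^ 2) * b ^ 2).
    { apply Rmult_le_pos; [| apply pow2_ge_0]. unfold K. nra. }
    assert (H3 : 0 <= (a + 4 * p * b) ^ 2) by apply pow2_ge_0.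
    nra. }
  assert (HNum : N / (2 * K) <= Num).
  { apply Rmult_le_reg_r with (2 * K); [lra|]. unfold Rdiv. rewrite Rmult_assoc, Rinv_l by lra. lra. }
  apply Rle_trans with (/ (2 * K)).
  - assert (E1 : / (2 * K) = / (4 * PI ^ 2) * / h ^ 2).
    { unfold K. field. split; [lra| pose proof (pow2_gt_0 h); lra]. }
    rewrite E1. apply Rmult_le_compat_l; [left; apply Rinv_0_lt_compat; pose proof (pow2_gt_0 PI); lra|].
    rewrite h_inv. pose proof INRn_pos.
    replace (2 / (1 + g)) with (2 * / (1 + g)) by reflexivity.
    rewrite <- Rpower_mult, Rpower_two by auto.
    apply Rle_Rpower_l; [left; apply Rinv_0_lt_compat; lra|]. split; [apply pow2_gt_0; lra|].
    unfold X. assert (1 <= 2 * PI ^ 4).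
    { pose proof (pow2_gt_0 PI). assert (PI ^ 4 = PI^2 * PI^2) by ring. pose proof PI2_1. assert (1 <= PI^2) by (simpl; nra). nra. }
    pose proof (pow2_gt_0 (INR n)). nra.
  - apply Rmult_le_reg_r with N; auto. unfold Rdiv. rewrite Rmult_assoc, Rinv_l by lra.
    replace (/ (2 * K) * N) with (N / (2 * K)) by (unfold Rdiv; ring). lra.
Qed.

End Lower.

Lemma RInt_le_const (f : R -> R) a b c : a <= b -> ex_RInt f a b ->
  (forall x, a < x < b -> f x <= c) -> RInt f a b <= (b - a) * c.
Proof.
  intros Hab Hf H. replace ((b - a) * c) with (RInt (fun _ => c) a b).
  - apply RInt_le; auto. apply ex_RInt_const.
  - rewrite RInt_const. reflexivity.
Qed.

Lemma Rpower_lt_base a b c : 0 < a -> a < b -> 0 < c -> Rpower a c < Rpower b c.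
Proof.
  intros. unfold Rpower. apply exp_increasing. apply Rmult_lt_compat_l; auto. apply ln_increasing; auto.
Qed.

Lemma w_cont g x : 0 < g -> continuity_pt (abs_pow2 g) x.
Proof.
  intro Hg. destruct (Req_dec x 0) as [->|Hx].
  - intros eps Heps. exists (Rpower eps (/ (2 * g))). split; [apply Rpower_pos|].
    intros y [[_ Hy0] Hy]. simpl in *. unfold R_dist in *. unfold abs_pow2.
    destruct (Req_dec_T 0 0) as [_|]; [|congruence]. destruct Req_dec_T as [|_]; [congruence|].
    rewrite Rminus_0_r in *. rewrite Rabs_right by (left; apply Rpower_pos).
    replace eps with (Rpower (Rpower eps (/ (2 * g))) (2 * g)).
    + apply Rpower_lt_base; auto; [apply Rabs_pos_lt; auto| lra].
    + rewrite Rpower_mult. replace (/ (2 * g) * (2 * g)) with 1 by (field; lra). apply Rpower_1; auto.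
  - apply continuity_pt_filterlim.
    apply (continuous_ext_loc _ (fun y => Rpower (Rabs y) (2 * g))).
    + exists (mkposreal _ (Rabs_pos_lt x Hx)). intros y Hy. unfold abs_pow2.
      destruct Req_dec_T as [->|]; [|reflexivity]. exfalso.
      change (Rabs (0 + - x) < Rabs x) in Hy. rewrite Rplus_0_l, Rabs_Ropp in Hy. lra.
    + apply continuity_pt_filterlim.
      apply (continuity_pt_comp Rabs (fun t => Rpower t (2 * g))). apply Rcontinuity_abs.
      apply derivable_continuous_pt. exists (2 * g * Rpower (Rabs x) (2 * g - 1)).
      apply derivable_pt_lim_power. apply Rabs_pos_lt; auto.
Qed.

Definition mp (t : R) := / 2 * (t + Rabs t).

Lemma mp_pos t : 0 <= t -> mp t = t.
Proof. intro. unfold mp. rewrite Rabs_right by lra. field. Qed.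
Lemma mp_neg t : t <= 0 -> mp t = 0.
Proof. intro. unfold mp. rewrite Rabs_left1 by lra. field. Qed.

Lemma mp_cont t : continuity_pt mp t.
Proof.
  unfold mp. apply continuity_pt_mult. apply continuity_pt_const; intros a b; reflexivity.
  apply continuity_pt_plus. apply continuity_pt_id. apply Rcontinuity_abs.
Qed.

Lemma mp_sq_der t : derivable_pt_lim (fun s => mp s ^ 2) t (2 * mp t).
Proof.
  intros eps Heps.
  destruct (Rtotal_order t 0) as [Ht|[Ht|Ht]].
  - exists (mkposreal (- t) ltac:(lra)). intros k Hk Hk'. simpl in Hk'.
    rewrite !mp_neg by (try apply Rabs_def2 in Hk'; lra).
    replace ((0 ^ 2 - 0 ^ 2) / k - 2 * 0) with 0 by (field; auto). rewrite Rabs_R0; lra.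
  - subst. exists (mkposreal eps Heps). intros k Hk Hk'. simpl in Hk'.
    rewrite (mp_pos 0) by lra. rewrite Rplus_0_l.
    replace ((mp k ^ 2 - 0 ^ 2) / k - 2 * 0) with (mp k * (mp k / k)) by (field; auto).
    assert (Hm : Rabs (mp k) <= Rabs k).
    { destruct (Rle_dec 0 k). rewrite mp_pos; lra. rewrite mp_neg by lra. rewrite Rabs_R0. apply Rabs_pos. }
    assert (Hm2 : Rabs (mp k / k) <= 1).
    { unfold Rdiv. rewrite Rabs_mult, Rabs_inv. apply Rmult_le_reg_r with (Rabs k). apply Rabs_pos_lt; auto.
      rewrite Rmult_assoc, Rinv_l, Rmult_1_r, Rmult_1_l; auto. apply Rabs_no_R0; auto. }
    rewrite Rabs_mult. pose proof (Rabs_pos (mp k)). pose proof (Rabs_pos (mp k / k)). nra.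
  - exists (mkposreal (Rmin t eps) ltac:(apply Rmin_pos; lra)). intros k Hk Hk'. simpl in Hk'.
    apply Rabs_def2 in Hk'. pose proof (Rmin_l t eps). pose proof (Rmin_r t eps).
    rewrite !mp_pos by lra.
    replace (((t + k) ^ 2 - t ^ 2) / k - 2 * t) with k by (field; auto).
    apply Rabs_def1; lra.
Qed.

Section Upper.
Variables (n : nat) (g : R).
Hypotheses (Hn : (1 <= n)%nat) (Hg : 0 < g).

Let h := Rpower (INR n) (- / (1 + g)).
Let u x := h ^ 2 - x ^ 2.
Let tv x := mp (u x) ^ 2.
Let tv' x := 2 * mp (u x) * (- (2 * x)).

Lemma INRn_pos' : 0 < INR n.
Proof. apply lt_0_INR; lia. Qed.

Lemma hu_pos : 0 < h.
Proof. apply Rpower_pos. Qed.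

Lemma hu_le1 : h <= 1.
Proof.
  pose proof INRn_pos'. unfold h. rewrite Rpower_Ropp.
  assert (1 <= Rpower (INR n) (/ (1 + g))).
  { replace 1 with (Rpower 1 (/ (1 + g))) at 1.
    - apply Rle_Rpower_l. left; apply Rinv_0_lt_compat; lra. split; [lra|]. apply (le_INR 1); auto.
    - unfold Rpower. rewrite ln_1, Rmult_0_r, exp_0. auto. }
  assert (/ Rpower (INR n) (/ (1 + g)) <= / 1) by (apply Rinv_le_contravar; lra).
  rewrite Rinv_1 in *. auto.
Qed.

Lemma tv_der x : derivable_pt_lim tv x (tv' x).
Proof.
  assert (H1 : derivable_pt_lim u x (- (2 * x))).
  { apply is_derive_Reals. unfold u. auto_derive; auto. ring. }
  pose proof (derivable_pt_lim_comp _ _ _ _ _ H1 (mp_sq_der (u x))) as H2.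
  exact H2.
Qed.

Lemma tv_cont x : continuity_pt tv x.
Proof. apply derivable_continuous_pt. exists (tv' x). apply tv_der. Qed.

Lemma u_cont x : continuity_pt u x.
Proof. apply derivable_continuous_pt. exists (- (2 * x)). apply is_derive_Reals. unfold u. auto_derive; auto. ring. Qed.

Lemma tv'_cont x : continuity_pt tv' x.
Proof.
  unfold tv'. apply continuity_pt_mult. apply continuity_pt_mult.
  apply continuity_pt_const; intros a b; reflexivity.
  apply (continuity_pt_comp u mp). apply u_cont. apply mp_cont.
  apply derivable_continuous_pt. exists (- 2). apply is_derive_Reals. auto_derive; auto. ring.
Qed.

Lemma tv_adm : admissible tv tv'.
Proof.
  pose proof hu_le1. pose proof hu_pos.
  split; [intros; apply tv_der|]. split; [intros; apply tv'_cont|].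
  split; [unfold tv, u; rewrite mp_neg by nra; ring|].
  split; [unfold tv, u; rewrite mp_neg by nra; ring|].
  exists 0. split; [lra|]. unfold tv, u. rewrite mp_pos by nra.
  apply pow_nonzero. nra.
Qed.

Let F x := tv' x ^ 2 + (INR n * PI) ^ 2 * abs_pow2 g x * tv x ^ 2.
Let G x := tv x ^ 2.

Lemma F_cont x : continuity_pt F x.
Proof.
  pose proof (tv_cont x). pose proof (tv'_cont x). pose proof (w_cont g x Hg).
  unfold F. apply continuity_pt_plus. apply cont_sq; auto.
  apply continuity_pt_mult; [|apply cont_sq; auto]. apply continuity_pt_mult; auto.
  apply continuity_pt_const; intros a b; reflexivity.
Qed.

Lemma G_cont x : continuity_pt G x.
Proof. apply cont_sq, tv_cont. Qed.


Lemma exF a b : ex_RInt F a b.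
Proof. apply (ex_RInt_continuous (V:=R_CompleteNormedModule)). intros; apply continuity_pt_filterlim, F_cont. Qed.
Lemma exG a b : ex_RInt G a b.
Proof. apply (ex_RInt_continuous (V:=R_CompleteNormedModule)). intros; apply continuity_pt_filterlim, G_cont. Qed.

Lemma outside x : h ^ 2 <= x ^ 2 -> tv x = 0 /\ tv' x = 0.
Proof. intro. unfold tv, tv', u. rewrite mp_neg by lra. split; ring. Qed.

Lemma split3 (f : R -> R) : (forall a b, ex_RInt f a b) ->
  RInt f (-1) 1 = RInt f (-1) (- h) + (RInt f (- h) h + RInt f h 1).
Proof.
  intro He. rewrite <- (RInt_Chasles f (-1) (- h) 1) by auto. rewrite <- (RInt_Chasles f (- h) h 1) by auto. reflexivity.
Qed.

Let W := Rpower h (2 * g).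
Let B := 16 * h ^ 6 + (INR n * PI) ^ 2 * W * h ^ 8.

Lemma Num_bound : RInt F (-1) 1 <= 2 * h * B.
Proof.
  pose proof hu_pos. pose proof hu_le1.
  rewrite split3 by apply exF.
  assert (H1 : RInt F (-1) (- h) <= (- h - -1) * 0).
  { apply RInt_le_const; [lra | apply exF |]. intros x Hx.
    unfold F. destruct (outside x) as [-> ->]; [nra|]. rewrite !pow_i by lia. lra. }
  assert (H3 : RInt F h 1 <= (1 - h) * 0).
  { apply RInt_le_const; [lra | apply exF |]. intros x Hx.
    unfold F. destruct (outside x) as [-> ->]; [nra|]. rewrite !pow_i by lia. lra. }
  assert (H2 : RInt F (- h) h <= (h - - h) * B).
  { apply RInt_le_const; [lra | apply exF |]. intros x Hx.
    unfold F, tv, tv'. assert (Hx2 : x ^ 2 <= h ^ 2) by nra.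
    assert (Hu : 0 <= u x <= h ^ 2) by (unfold u; pose proof (pow2_ge_0 x); lra).
    rewrite mp_pos by lra.
    assert (Hw : 0 <= abs_pow2 g x <= W).
    { split; [apply abs_pow2_nonneg|]. unfold abs_pow2, W. destruct Req_dec_T; [left; apply Rpower_pos|].
      apply Rle_Rpower_l; [lra|]. split; [apply Rabs_pos_lt; auto|]. apply Rabs_le; lra. }
    assert (E1 : (2 * u x * - (2 * x)) ^ 2 <= 16 * h ^ 6).
    { replace ((2 * u x * - (2 * x)) ^ 2) with (16 * (u x ^ 2 * x ^ 2)) by ring.
      replace (16 * h ^ 6) with (16 * ((h ^ 2) ^ 2 * h ^ 2)) by ring.
      apply Rmult_le_compat_l; [lra|]. apply Rmult_le_compat; try apply pow2_ge_0; auto.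
      apply pow_incr; lra. }
    assert (E2 : (u x ^ 2) ^ 2 <= h ^ 8).
    { replace (h ^ 8) with (((h ^ 2) ^ 2) ^ 2) by ring. apply pow_incr. split; [apply pow2_ge_0|]. apply pow_incr; lra. }
    assert (E3 : (INR n * PI) ^ 2 * abs_pow2 g x * (u x ^ 2) ^ 2 <= (INR n * PI) ^ 2 * W * h ^ 8).
    { apply Rmult_le_compat; [| apply pow2_ge_0 | | auto].
      apply Rmult_le_pos; [apply pow2_ge_0| lra]. apply Rmult_le_compat_l; [apply pow2_ge_0| lra]. }
    unfold B. lra. }
  lra.
Qed.

Lemma Den_bound : 256 * h ^ 9 / 315 <= RInt G (-1) 1.
Proof.
  pose proof hu_pos. pose proof hu_le1.
  rewrite split3 by apply exG.
  assert (H1 : 0 <= RInt G (-1) (- h)) by (apply RInt_ge_0; [lra | apply exG | intros; apply pow2_ge_0]).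
  assert (H3 : 0 <= RInt G h 1) by (apply RInt_ge_0; [lra | apply exG | intros; apply pow2_ge_0]).
  assert (H2 : RInt G (- h) h = 256 * h ^ 9 / 315).
  { rewrite (RInt_ext G (fun x => (h ^ 2 - x ^ 2) ^ 4)).
    2:{ intros x Hx. rewrite Rmin_left, Rmax_right in Hx by lra. unfold G, tv, u.
        change ((mp (h ^ 2 - x ^ 2) ^ 2) ^ 2 = (h ^ 2 - x ^ 2) ^ 4).
        rewrite mp_pos by nra. ring. }
    set (P := fun x => h ^ 8 * x - 4 * h ^ 6 * x ^ 3 / 3 + 6 * h ^ 4 * x ^ 5 / 5 - 4 * h ^ 2 * x ^ 7 / 7 + x ^ 9 / 9).
    apply is_RInt_unique.
    replace (256 * h ^ 9 / 315) with (minus (P h) (P (- h))).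
    2:{ change (@eq R (P h - P (- h)) (256 * h ^ 9 / 315)). unfold P. field. }
    apply (is_RInt_derive (V:=R_CompleteNormedModule) P).
    - intros x _. unfold P. auto_derive; auto. match goal with |- ?a = ?b => change (@eq R a b) end. field.
    - intros y _. apply (ex_derive_continuous (fun x0 => (h ^ 2 - x0 ^ 2) ^ 4)). auto_derive; auto. }
  lra.
Qed.

Lemma hinv2 : / h ^ 2 = Rpower (INR n) (2 / (1 + g)).
Proof.
  pose proof hu_pos. pose proof INRn_pos'.
  rewrite <- Rpower_two by auto. unfold h. rewrite Rpower_mult.
  replace (- / (1 + g) * 2) with (- (2 / (1 + g))) by (field; lra).
  rewrite Rpower_Ropp, Rinv_inv. auto.
Qed.

Lemma hW : INR n ^ 2 * W = Rpower (INR n) (2 / (1 + g)).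
Proof.
  pose proof hu_pos. pose proof INRn_pos'.
  unfold W, h. rewrite Rpower_mult, <- Rpower_two, <- Rpower_plus by auto. f_equal. field. lra.
Qed.

Lemma upper_q : exists q, rayleigh_set n g q /\ q <= 315 / 128 * (16 + PI ^ 2) * Rpower (INR n) (2 / (1 + g)).
Proof.
  assert (p1 : Riemann_integrable F (-1) 1) by (apply continuity_implies_RiemannInt; [lra| intros; apply F_cont]).
  assert (p2 : Riemann_integrable G (-1) 1) by (apply continuity_implies_RiemannInt; [lra| intros; apply G_cont]).
  exists (RiemannInt p1 / RiemannInt p2). split.
  { exists tv, tv'. split; [apply tv_adm|]. exists p1, p2. reflexivity. }
  rewrite <- !RInt_Reals.
  pose proof Num_bound. pose proof Den_bound. pose proof hu_pos.
  assert (HNum0 : 0 <= RInt F (-1) 1).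
  { apply RInt_ge_0; [lra| apply exF|]. intros x _. unfold F.
    pose proof (abs_pow2_nonneg g x). pose proof (pow2_ge_0 (tv' x)). pose proof (pow2_ge_0 (tv x)).
    pose proof (pow2_ge_0 (INR n * PI)).
    assert (0 <= (INR n * PI) ^ 2 * abs_pow2 g x * tv x ^ 2) by (apply Rmult_le_pos; auto; apply Rmult_le_pos; auto).
    lra. }
  assert (HD0 : 0 < 256 * h ^ 9 / 315) by (pose proof (pow_lt h 9 H1); lra).
  apply Rle_trans with (RInt F (-1) 1 / (256 * h ^ 9 / 315)).
  { unfold Rdiv at 1 2. apply Rmult_le_compat_l; auto. apply Rinv_le_contravar; auto. }
  apply Rle_trans with (2 * h * B / (256 * h ^ 9 / 315)).
  { unfold Rdiv at 1 3. apply Rmult_le_compat_r; auto. left; apply Rinv_0_lt_compat; auto. }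
  replace (2 * h * B / (256 * h ^ 9 / 315)) with (315 / 128 * (16 * / h ^ 2 + PI ^ 2 * (INR n ^ 2 * W))).
  2:{ unfold B. field. lra. }
  rewrite hinv2, hW. lra.
Qed.

End Upper.

Theorem proposition2p3 :
  (forall g : R, 0 < g <= 1 ->
     exists c : R, 0 < c /\
       forall n : nat, (1 <= n)%nat -> c * Rpower (INR n) (2 / (1 + g)) <= lambda n g) /\
  (forall g : R, 0 < g ->
     exists c : R, 0 < c /\
       forall n : nat, (1 <= n)%nat -> lambda n g <= c * Rpower (INR n) (2 / (1 + g))).
Proof.
  pose proof PI_RGT_0. assert (0 < PI ^ 2) by (apply pow_lt; auto).
  split.
  - intros g Hg. exists (/ (4 * PI ^ 2)). split; [apply Rinv_0_lt_compat; lra|].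
    intros n Hn.
    destruct (upper_q n g Hn (proj1 Hg)) as [q0 [Hq0 _]].
    assert (Hglb := lambda_glb n g (ex_intro _ q0 Hq0) (q_nonneg n g)).
    apply (proj2 Hglb). intros q (v & v' & Ha & p1 & p2 & ->).
    apply lower_q; auto. lra.
  - intros g Hg. exists (315 / 128 * (16 + PI ^ 2)). split; [lra|].
    intros n Hn.
    destruct (upper_q n g Hn Hg) as [q0 [Hq0 Hle]].
    assert (Hglb := lambda_glb n g (ex_intro _ q0 Hq0) (q_nonneg n g)).
    apply Rle_trans with q0; auto. apply (proj1 Hglb); auto.
Qed.
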